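(* Let $G$ and $H$ be Hausdorff locally quasi-convex abelian groups. Then the dual groups of $G\otimes H$ and of $G\otimes_{\mathcal Q}H$ are (algebraically) isomorphic to $\mathbb X(G,H)$, the group of all continuous bicharacters of $G\times H$: $\widehat{G\otimes H}\simeq\widehat{G\otimes_{\mathcal Q}H}\simeq\mathbb X(G,H)$.
   Context: $\mathbb T=\mathbb R/\mathbb Z$; a character is a continuous homomorphism into $\mathbb T$ and $\widehat L$ denotes the group of characters of $L$. A continuous bihomomorphism $b:G\times H\to L$ is separately a continuous homomorphism in each variable and continuous at $(0,0)$; a continuous bicharacter is a continuous bihomomorphism into $\mathbb T$. $G\otimes H$ is the tensor product in the category of all topological abelian groups: the quotient $A(G\times H)/N$ of the free abelian topological group on the space $G\times H$ by the subgroup $N$ generated by all $\sigma(a+b,c)-\sigma(a,c)-\sigma(b,c)$ and $\sigma(a,c+d)-\sigma(a,c)-\sigma(a,d)$ ($\sigma$ the canonical map), with $\otimes$ the composite of $\sigma$ and the quotient map. A subset $A$ of $L$ is quasi-convex if for every $g\notin A$ there is a character $\chi$ with $|\chi(a)|\le1/4$ on $A$ and $|\chi(g)|>1/4$; $\mathcal Q$ is the class of Hausdorff abelian groups with a basis at $0$ of quasi-convex sets. For $G,H\in\mathcal Q$, $G\otimes_{\mathcal Q}H$ is the group in $\mathcal Q$ with a continuous bihomomorphism $\otimes_{\mathcal Q}:G\times H\to G\otimes_{\mathcal Q}H$ through which every continuous bihomomorphism into a group of $\mathcal Q$ factors via a unique continuous homomorphism (unique up to topological isomorphism). *)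

(* Defs.v *)
(* Topologies are handled explicitly as families of open
   sets (predicates), since the paper's constructions (free abelian
   topological group, quotient topology, tensor products) produce new
   topologies on existing carriers. *)
From HB Require Import structures.
From mathcomp Require Import all_boot all_order all_algebra.
From mathcomp Require Import boolp.
From Stdlib Require Rdefinitions.
From mathcomp Require Import Rstruct.
Notation R := Rdefinitions.R.
From mathcomp.multinomials Require Import freeg.

Set Implicit Arguments.
Unset Strict Implicit.
Unset Printing Implicit Defensive.

Import Order.TTheory GRing.Theory Num.Theory.
Local Open Scope ring_scope.
Local Open Scope quotient_scope.

Definition opens (T : Type) := (T -> Prop) -> Prop.

Definition is_topology {T : Type} (O : opens T) : Prop :=
  [/\ O (fun _ => True),
      (forall A B, O A -> O B -> O (fun x => A x /\ B x)) &
      (forall F : (T -> Prop) -> Prop,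
          (forall A, F A -> O A) -> O (fun x => exists A, F A /\ A x))].

Definition generated {T : Type} (B : opens T) : opens T :=
  fun U => forall O, is_topology O -> (forall A, B A -> O A) -> O U.

Definition continuous {S T : Type} (OS : opens S) (OT : opens T)
  (f : S -> T) : Prop :=
  forall V, OT V -> OS (fun x => V (f x)).

Definition continuous_at {S T : Type} (OS : opens S) (OT : opens T)
  (f : S -> T) (x : S) : Prop :=
  forall V, OT V -> V (f x) ->
    exists U, [/\ OS U, U x & forall y, U y -> V (f y)].

Definition prod_top {S T : Type} (OS : opens S) (OT : opens T) : opens (S * T) :=
  generated (fun W => (exists U, OS U /\ W = (fun p => U p.1)) \/
                      (exists V, OT V /\ W = (fun p => V p.2))).

Definition hausdorff {T : Type} (O : opens T) : Prop :=
  forall x y : T, x <> y ->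
    exists U V, [/\ O U, O V, U x, V y & forall z, ~ (U z /\ V z)].

Definition top_group {Z : zmodType} (O : opens Z) : Prop :=
  is_topology O /\ continuous (prod_top O O) O (fun p => p.1 - p.2).

Definition is_hom {A B : Type} (addA : A -> A -> A) (addB : B -> B -> B)
  (f : A -> B) : Prop := forall x y, f (addA x y) = addB (f x) (f y).

(* The circle group T = R/Z, realised on representatives in [0,1)     *)

Record circ := Circ { cval : R; cvalP : (0 <= cval < 1)%R }.

Definition frac (x : R) : R := x - (Num.floor x)%:~R.

Lemma frac_itv (x : R) : (0 <= frac x < 1)%R.
Proof.
rewrite /frac subr_ge0 floor_le /= ltrBlDl.
by have := floorD1_gt x; rewrite intrD.
Qed.

Definition tzero : circ := @Circ 0 (introT andP (conj (lexx 0) ltr01)).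
Definition tadd (a b : circ) : circ := Circ (frac_itv (cval a + cval b)).

Definition cdist (s t : circ) : R :=
  Num.min `|cval s - cval t| (1 - `|cval s - cval t|).

Definition tnorm (t : circ) : R := cdist t tzero.

Definition circ_opens : opens circ :=
  fun U => forall t, U t -> exists e : R, 0 < e /\ (forall s, cdist s t < e -> U s).

Definition character {Z : Type} (addZ : Z -> Z -> Z) (O : opens Z)
  (chi : Z -> circ) : Prop :=
  is_hom addZ tadd chi /\ continuous O circ_opens chi.

Definition fadd {Z : Type} (f g : Z -> circ) : Z -> circ :=
  fun z => tadd (f z) (g z).
Definition fadd2 {X Y : Type} (f g : X -> Y -> circ) : X -> Y -> circ :=
  fun x y => tadd (f x y) (g x y).

Definition quasi_convex {L : zmodType} (O : opens L) (A : L -> Prop) : Prop :=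
  forall g, ~ A g ->
    exists chi, [/\ character +%R O chi,
                    (forall a, A a -> tnorm (chi a) <= 1 / 4 :> R) &
                    1 / 4 < tnorm (chi g) :> R].

Definition locally_quasi_convex {L : zmodType} (O : opens L) : Prop :=
  forall U, O U -> U 0 ->
    exists A, [/\ quasi_convex O A,
                  (exists V, [/\ O V, V 0 & forall x, V x -> A x]) &
                  forall x, A x -> U x].

Definition in_Q {L : zmodType} (O : opens L) : Prop :=
  [/\ top_group O, hausdorff O & locally_quasi_convex O].

Definition cont_bihom {G H : zmodType} {L : Type} (OG : opens G) (OH : opens H)
  (addL : L -> L -> L) (OL : opens L) (zeroL : L) (b : G -> H -> L) : Prop :=
  [/\ forall x, is_hom +%R addL (b x) /\ continuous OH OL (b x),
      forall y, is_hom +%R addL (fun x => b x y) /\ continuous OG OL (fun x => b x y)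
    & (b 0 0 = zeroL /\
       continuous_at (prod_top OG OH) OL (fun p => b p.1 p.2) (0, 0))].

Definition bichar {G H : zmodType} (OG : opens G) (OH : opens H)
  (b : G -> H -> circ) : Prop := cont_bihom OG OH tadd circ_opens tzero b.

Section Tensor.
Variables (G H : zmodType) (OG : opens G) (OH : opens H).

Definition FA := {freeg (G * H)%type}.
Definition sigma (p : G * H) : FA := << p >>.

(* free abelian topological group A(G x H): the finest group topology on
   the free abelian group making sigma continuous (the supremum of all
   such group topologies) *)
Definition FA_opens : opens FA :=
  generated (fun U => exists O : opens FA,
    [/\ top_group O, continuous (prod_top OG OH) O sigma & O U]).

Definition N_gen (z : FA) : Prop :=
  (exists a b c, z = sigma (a + b, c) - sigma (a, c) - sigma (b, c)) \/
  (exists a c d, z = sigma (a, c + d) - sigma (a, c) - sigma (a, d)).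

Definition N (z : FA) : Prop :=
  forall S : FA -> Prop, S 0 -> (forall x y, S x -> S y -> S (x - y)) ->
    (forall x, N_gen x -> S x) -> S z.

Lemma N0 : N 0. Proof. by move=> S S0 _ _. Qed.
Lemma NB x y : N x -> N y -> N (x - y).
Proof. rewrite /N => Nx Ny S S0 SB Sg; apply: (SB); [exact: (Nx S S0 SB Sg) | exact: (Ny S S0 SB Sg)]. Qed.

Definition Nrel (x y : FA) : bool := `[< N (x - y) >].

Lemma Nrel_refl : reflexive Nrel.
Proof. move=> x; apply/asboolP; rewrite subrr; exact: N0. Qed.
Lemma Nrel_sym : symmetric Nrel.
Proof.
suff h x y : Nrel x y -> Nrel y x by move=> x y; apply/idP/idP; apply: h.
move/asboolP=> nxy; apply/asboolP.
by have := NB N0 nxy; rewrite sub0r opprB.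
Qed.
Lemma Nrel_trans : transitive Nrel.
Proof.
move=> y x z /asboolP nxy /asboolP nyz; apply/asboolP.
have := NB nxy (NB N0 nyz); rewrite sub0r opprK.
by rewrite addrA subrK.
Qed.

Canonical Nequiv := EquivRel Nrel Nrel_refl Nrel_sym Nrel_trans.

Definition tensor := {eq_quot Nequiv}.

Definition tensor_add (a b : tensor) : tensor := \pi_tensor (repr a + repr b : FA).

Definition tensor_opens : opens tensor :=
  fun U => FA_opens (fun x => U (\pi_tensor x)).

Definition tensor_map (g : G) (h : H) : tensor := \pi_tensor (sigma (g, h)).

End Tensor.

Definition is_Q_tensor {G H : zmodType} (OG : opens G) (OH : opens H)
  (P : zmodType) (OP : opens P) (bP : G -> H -> P) : Prop :=
  [/\ in_Q OP, cont_bihom OG OH +%R OP 0 bP &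
      forall (L : zmodType) (OL : opens L) (b : G -> H -> L),
        in_Q OL -> cont_bihom OG OH +%R OL 0 b ->
        (exists f : P -> L, [/\ is_hom +%R +%R f, continuous OP OL f &
                                forall x y, b x y = f (bP x y)]) /\
        (forall f1 f2 : P -> L,
            is_hom +%R +%R f1 -> continuous OP OL f1 ->
            (forall x y, b x y = f1 (bP x y)) ->
            is_hom +%R +%R f2 -> continuous OP OL f2 ->
            (forall x y, b x y = f2 (bP x y)) -> f1 = f2)].

Definition group_iso_on {A B : Type} (DA : A -> Prop) (DB : B -> Prop)
  (addA : A -> A -> A) (addB : B -> B -> B) (phi : A -> B) : Prop :=
  [/\ forall a, DA a -> DB (phi a),
      forall a a', DA a -> DA a' -> phi a = phi a' -> a = a',
      forall b, DB b -> exists2 a, DA a & phi a = b &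
      forall a a', DA a -> DA a' -> phi (addA a a') = addB (phi a) (phi a')].

(* Main.v *)
From HB Require Import structures.
From mathcomp Require Import all_boot all_order all_algebra.
From mathcomp Require Import boolp.
From mathcomp Require Import Rstruct.
From mathcomp.multinomials Require Import freeg.
From mathcomp Require Import ring lra zify.
Require Import Defs.
Set Implicit Arguments.
Unset Strict Implicit.
Unset Printing Implicit Defensive.
Import Order.TTheory GRing.Theory Num.Theory.
Local Open Scope ring_scope.
Local Open Scope quotient_scope.

Lemma frac_id (x : R) : 0 <= x < 1 -> frac x = x.
Proof.
move=> hx; rewrite /frac (@floor_def _ x 0) ?subr0 // add0r.
Qed.

Lemma fracDz (x : R) (n : int) : frac (x + n%:~R) = frac x.
Proof.
rewrite /frac (@floor_def _ (x + n%:~R) (Num.floor x + n)).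
  by rewrite intrD; ring.
have := floor_le x; have := floorD1_gt x.
rewrite !intrD => h1 h2; apply/andP; split; lra.
Qed.

Lemma fracE (x : R) : frac x = x + (- Num.floor x)%:~R.
Proof. by rewrite /frac mulrNz. Qed.

Lemma fracK (x y : R) : frac (frac x + y) = frac (x + y).
Proof. by rewrite [frac x]fracE addrAC fracDz. Qed.

Lemma fracKr (x y : R) : frac (x + frac y) = frac (x + y).
Proof. by rewrite addrC fracK addrC. Qed.

Definition dz (x : R) : R := Num.min (frac x) (1 - frac x).

Lemma int_cases (n : int) : n = 0 \/ (n%:~R <= -1 :> R) \/ (1 <= n%:~R :> R).
Proof.
case: (ltrgtP n 0) => h; [right; left | right; right | by left].
- have h' : (n%:~R : R) <= (-1)%:~R by rewrite ler_int; lia.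
  exact h'.
- have h' : (1%:~R : R) <= n%:~R by rewrite ler_int; lia.
  exact h'.
Qed.

Lemma dz_le (x : R) (n : int) : dz x <= `|x - n%:~R|.
Proof.
rewrite /dz ge_min; have hf := frac_itv x.
have : x - n%:~R = frac x + (Num.floor x - n)%:~R.
  by rewrite /frac intrD mulrNz; ring.
move=> ->; set m := (_ - _)%R.
have [->|[hm|hm]] := int_cases m.
- by rewrite addr0 ger0_norm ?lexx //; case/andP: hf.
- apply/orP; right; rewrite ler0_norm; last lra. lra.
- apply/orP; left; rewrite ger0_norm; last lra. lra.
Qed.

Lemma dz_eq (x : R) : exists n : int, dz x = `|x - n%:~R|.
Proof.
have hf := frac_itv x; rewrite /dz.
case: (leP (frac x) (1 - frac x)) => h.
- exists (Num.floor x); rewrite ger0_norm //.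
  by have := floor_le x; lra.
- exists (Num.floor x + 1); rewrite ler0_norm; last first.
    by have := floorD1_gt x; lra.
  by rewrite /frac intrD; ring.
Qed.

Lemma dz_ge0 x : 0 <= dz x.
Proof. by have [n ->] := dz_eq x. Qed.

Lemma dz_abs x : dz x <= `|x|.
Proof. by have := dz_le x 0; rewrite subr0. Qed.

Lemma dzDz x (n : int) : dz (x + n%:~R) = dz x.
Proof. by rewrite /dz fracDz. Qed.

Lemma dz_frac x : dz (frac x) = dz x.
Proof. by rewrite [frac x]fracE dzDz. Qed.

Lemma dzN x : dz (- x) = dz x.
Proof.
apply/eqP; rewrite eq_le; apply/andP; split.
- have [n ->] := dz_eq x; apply: le_trans (dz_le (- x) (- n)) _.
  rewrite (_ : - x - (- n)%:~R = - (x - n%:~R)); first by rewrite normrN.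
  by rewrite mulrNz; ring.
- have [n ->] := dz_eq (- x); apply: le_trans (dz_le x (- n)) _.
  rewrite (_ : x - (- n)%:~R = - (- x - n%:~R)); first by rewrite normrN.
  by rewrite mulrNz; ring.
Qed.

Lemma dz_tri x y : dz (x + y) <= dz x + dz y.
Proof.
have [n ->] := dz_eq x; have [m ->] := dz_eq y.
apply: le_trans (dz_le _ (n + m)) _.
rewrite intrD (_ : x + y - _ = (x - n%:~R) + (y - m%:~R)); last by ring.
exact: ler_normD.
Qed.

Lemma dz_small z : 0 <= z <= 1/2 -> dz z = z.
Proof.
move=> /andP [h0 h1]; apply/eqP; rewrite eq_le; apply/andP; split.
  by have := dz_abs z; rewrite ger0_norm.
have [n ->] := dz_eq z.
have [->|[hm|hm]] := int_cases n.
- by rewrite subr0 ger0_norm.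
- rewrite ger0_norm; lra.
- rewrite ler0_norm; lra.
Qed.

Lemma dz_muln (k : nat) x : dz (k%:R * x) <= k%:R * dz x.
Proof.
elim: k => [|k ih]; first by rewrite !mul0r dz_small //; lra.
rewrite -addn1 natrD !mulrDl !mul1r.
apply: le_trans (dz_tri _ _) _; exact: lerD.
Qed.

Lemma dz0_int x : dz x = 0 -> exists n : int, x = n%:~R.
Proof.
have [n ->] := dz_eq x => /eqP; rewrite normr_eq0 subr_eq0 => /eqP ->.
by exists n.
Qed.

HB.instance Definition _ := [isSub for cval].
HB.instance Definition _ := [Choice of circ by <:].

Definition topp (a : circ) : circ := Circ (frac_itv (- cval a)).

Lemma circ_eq (a b : circ) : cval a = cval b -> a = b.
Proof. exact: val_inj. Qed.

Lemma fracC (a : circ) : frac (cval a) = cval a.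
Proof. exact/frac_id/cvalP. Qed.

Lemma taddA : associative tadd.
Proof. by move=> a b c; apply: circ_eq => /=; rewrite fracKr fracK addrA. Qed.
Lemma taddC : commutative tadd.
Proof. by move=> a b; apply: circ_eq => /=; rewrite addrC. Qed.
Lemma tadd0 : left_id tzero tadd.
Proof. by move=> a; apply: circ_eq => /=; rewrite add0r fracC. Qed.
Lemma taddN : left_inverse tzero topp tadd.
Proof.
move=> a; apply: circ_eq => /=; rewrite fracK addNr frac_id //.
by rewrite lexx ltr01.
Qed.

HB.instance Definition _ := GRing.isZmodule.Build circ taddA taddC tadd0 taddN.

Lemma taddE (a b : circ) : tadd a b = a + b.
Proof. by []. Qed.

Lemma caddE (a b : circ) : cval (a + b) = frac (cval a + cval b).
Proof. by []. Qed.
Lemma coppE (a : circ) : cval (- a) = frac (- cval a).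
Proof. by []. Qed.
Lemma c0E : cval (0 : circ) = 0.
Proof. by []. Qed.
Lemma cdist_dz_aux (d : R) : -1 < d < 1 ->
  Num.min `|d| (1 - `|d|) = dz d.
Proof.
move=> /andP [h1 h2]; apply/eqP; rewrite eq_le; apply/andP; split.
- have [n ->] := dz_eq d; rewrite ge_min.
  have [->|[hm|hm]] := int_cases n.
  + by rewrite subr0 lexx.
  + apply/orP; right; case: (lerP 0 d) => hd.
    * rewrite ger0_norm // ger0_norm; lra.
    * rewrite ltr0_norm // ger0_norm; lra.
  + apply/orP; right; case: (lerP 0 d) => hd.
    * rewrite ger0_norm // ler0_norm; lra.
    * rewrite ltr0_norm // ler0_norm; lra.
- rewrite le_min; apply/andP; split.
  + by have := dz_le d 0; rewrite subr0.
  + case: (lerP 0 d) => hd.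
    * have h := dz_le d 1; rewrite mulr1z in h.
      rewrite (ger0_norm hd); rewrite (@ler0_norm _ (d - 1)) in h; lra.
    * have h := dz_le d (-1); rewrite (_ : (-1)%:~R = -1 :> R) // in h.
      rewrite (ltr0_norm hd); rewrite (@ger0_norm _ (d - -1)) in h; lra.
Qed.

Lemma cdistE (s t : circ) : cdist s t = dz (cval s - cval t).
Proof.
rewrite /cdist cdist_dz_aux //.
have := cvalP s; have := cvalP t => /andP [? ?] /andP [? ?].
apply/andP; split; lra.
Qed.

Lemma cnormE (a : circ) : tnorm a = dz (cval a).
Proof. by rewrite /tnorm cdistE /= subr0. Qed.

Lemma cdistE' (s t : circ) : cdist s t = tnorm (s - t).
Proof.
by rewrite cdistE cnormE caddE coppE fracKr dz_frac.
Qed.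

Lemma tnormD (a b : circ) : tnorm (a + b) <= tnorm a + tnorm b.
Proof. by rewrite !cnormE caddE dz_frac dz_tri. Qed.

Lemma tnormN (a : circ) : tnorm (- a) = tnorm a.
Proof. by rewrite !cnormE coppE dz_frac dzN. Qed.

Lemma tnorm_ge0 (a : circ) : 0 <= tnorm a.
Proof. by rewrite cnormE dz_ge0. Qed.

Lemma cdistC (s t : circ) : cdist s t = cdist t s.
Proof. by rewrite !cdistE' -tnormN opprB. Qed.

Lemma cdist_tri (s t u : circ) : cdist s u <= cdist s t + cdist t u.
Proof.
rewrite !cdistE' (_ : s - u = (s - t) + (t - u)); first exact: tnormD.
by rewrite addrA subrK.
Qed.

Lemma cdist0 (s : circ) : cdist s s = 0.
Proof. by rewrite cdistE subrr dz_small //; lra. Qed.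

Lemma cdist_eq0 (s t : circ) : cdist s t = 0 -> s = t.
Proof.
rewrite cdistE => /dz0_int [n hn]; apply: circ_eq.
have := cvalP s; have := cvalP t => /andP [? ?] /andP [? ?].
have [hn0|[hm|hm]] := int_cases n.
- by move: hn; rewrite hn0 => /eqP; rewrite subr_eq0 => /eqP.
- lra.
- lra.
Qed.

Lemma cval_muln (t : circ) (k : nat) : cval (t *+ k) = frac (k%:R * cval t).
Proof.
elim: k => [|k ih]; first by rewrite mul0r frac_id // lexx ltr01.
by rewrite mulrS caddE ih fracKr -addn1 natrD mulrDl mul1r addrC.
Qed.

Lemma tnorm_muln (t : circ) (k : nat) : tnorm (t *+ k) <= k%:R * tnorm t.
Proof. by rewrite !cnormE cval_muln dz_frac dz_muln. Qed.

Lemma open_ext {T : Type} (O : opens T) (A B : T -> Prop) :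
  O A -> (forall x, A x <-> B x) -> O B.
Proof.
move=> OA hAB; suff -> : B = A by [].
by apply: funext => x; apply: propext; split; move/hAB.
Qed.

Lemma top_empty {T : Type} (O : opens T) : is_topology O -> O (fun _ => False).
Proof.
case=> _ _ hU; apply: open_ext (hU (fun _ => False) _) _ => //.
by move=> x; split => // -[A []].
Qed.

Lemma top_full {T : Type} (O : opens T) : is_topology O -> O (fun _ => True).
Proof. by case. Qed.

Lemma generated_top {T : Type} (B : opens T) : is_topology (generated B).
Proof.
split.
- by move=> O [] *.
- move=> A C hA hC O tO hB; have [_ hI _] := tO; exact: hI (hA O tO hB) (hC O tO hB).
- move=> F hF O tO hB; have [_ _ hU] := tO; apply: hU => A /hF; exact.
Qed.

Lemma generated_sub {T : Type} (B : opens T) A : B A -> generated B A.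
Proof. by move=> hA O _ hB; exact: hB. Qed.

Lemma cont_generated {S T : Type} (OS : opens S) (B : opens T) (g : S -> T) :
  is_topology OS -> (forall A, B A -> OS (fun x => A (g x))) ->
  continuous OS (generated B) g.
Proof.
move=> tS hB V hV; apply: (hV (fun A => OS (fun x => A (g x)))) => //.
have [hT hI hU] := tS; split => //.
- by move=> A C; exact: hI.
- move=> F hF.
  have := hU (fun A' => exists A, F A /\ A' = (fun x => A (g x))) _.
  move=> /(_ _) h; apply: open_ext (h _) _.
  + by move=> A' [A [FA ->]]; exact: hF.
  + move=> x; split.
    * by case=> A' [[A [FA ->]] hx]; exists A.
    * by case=> A [FA hx]; exists (fun x => A (g x)); split => //; exists A.
Qed.

Lemma cont_comp {S T U : Type} (OS : opens S) (OT : opens T) (OU : opens U)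
  (f : S -> T) (g : T -> U) :
  continuous OS OT f -> continuous OT OU g -> continuous OS OU (fun x => g (f x)).
Proof. by move=> hf hg V hV; exact: (hf _ (hg V hV)). Qed.

Lemma cont_at_of {S T : Type} (OS : opens S) (OT : opens T) (f : S -> T) x :
  continuous OS OT f -> continuous_at OS OT f x.
Proof. by move=> hf V hV Vx; exists (fun y => V (f y)); split => //; exact: hf. Qed.

Lemma prod_rect {S T : Type} (OS : opens S) (OT : opens T) A B :
  OS A -> OT B -> prod_top OS OT (fun p => A p.1 /\ B p.2).
Proof.
move=> hA hB O tO hsub; have [_ hI _] := tO; apply: hI; apply: hsub.
- by left; exists A.
- by right; exists B.
Qed.

Definition rect_nbhd {S T : Type} (OS : opens S) (OT : opens T)
  (W : S * T -> Prop) (p : S * T) :=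
  exists A B, [/\ OS A, OT B, A p.1, B p.2 & forall q, A q.1 -> B q.2 -> W q].

Lemma prod_open_of_rect {S T : Type} (OS : opens S) (OT : opens T) W :
  (forall p, W p -> rect_nbhd OS OT W p) -> prod_top OS OT W.
Proof.
move=> hW O tO hsub; have [_ hI hU] := tO.
pose F := fun R => exists A B, [/\ OS A, OT B, (forall q, A q.1 -> B q.2 -> W q)
                                 & R = (fun q => A q.1 /\ B q.2)].
apply: open_ext (hU F _) _.
- move=> R [A [B [hA hB _ ->]]]; apply: hI; apply: hsub.
  + by left; exists A.
  + by right; exists B.
- move=> p; split.
  + by case=> R [[A [B [_ _ hAB ->]]] [h1 h2]]; exact: hAB.
  + move=> /hW [A [B [hA hB h1 h2 hAB]]].
    by exists (fun q => A q.1 /\ B q.2); split => //; exists A, B.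
Qed.

Lemma rect_of_prod_open {S T : Type} (OS : opens S) (OT : opens T) W p :
  is_topology OS -> is_topology OT ->
  prod_top OS OT W -> W p -> rect_nbhd OS OT W p.
Proof.
move=> [tS1 tS2 tS3] [tT1 tT2 tT3] hW; move: p.
apply: (hW (fun W => forall p, W p -> rect_nbhd OS OT W p)).
- split.
  + by move=> p _; exists (fun _ => True), (fun _ => True).
  + move=> A C hA hC p [/hA [A1 [B1 [? ? ? ? h1]]] /hC [A2 [B2 [? ? ? ? h2]]]].
    exists (fun x => A1 x /\ A2 x), (fun x => B1 x /\ B2 x); split => //.
    * exact: tS2.
    * exact: tT2.
    * by move=> q [? ?] [? ?]; split; [apply: h1 | apply: h2].
  + move=> F hF p [A [FA Ap]]; have [A1 [B1 [? ? ? ? h1]]] := hF A FA p Ap.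
    exists A1, B1; split => // q ? ?; exists A; split => //; exact: h1.
- move=> A [[U [hU ->]]|[V [hV ->]]] p hp.
  + by exists U, (fun _ => True).
  + by exists (fun _ => True), V.
Qed.

Lemma cont_pair_l {S T : Type} (OS : opens S) (OT : opens T) (x : S) :
  is_topology OT -> continuous OT (prod_top OS OT) (fun y => (x, y)).
Proof.
move=> tT; apply: cont_generated => // A [[U [hU ->]]|[V [hV ->]]] /=.
- case: (pselect (U x)) => hx.
  + by apply: open_ext (top_full tT) _.
  + by apply: open_ext (top_empty tT) _.
- exact: open_ext hV _.
Qed.

Lemma cont_pair_r {S T : Type} (OS : opens S) (OT : opens T) (y : T) :
  is_topology OS -> continuous OS (prod_top OS OT) (fun x => (x, y)).
Proof.
move=> tS; apply: cont_generated => // A [[U [hU ->]]|[V [hV ->]]] /=.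
- exact: open_ext hU _.
- case: (pselect (V y)) => hx.
  + by apply: open_ext (top_full tS) _.
  + by apply: open_ext (top_empty tS) _.
Qed.

Definition cball (t : circ) (e : R) : circ -> Prop := fun s => cdist s t < e.

Lemma cdist_ge0 s t : 0 <= cdist s t.
Proof. by rewrite cdistE' tnorm_ge0. Qed.

Lemma cball_open t e : circ_opens (cball t e).
Proof.
move=> s hs; exists (e - cdist s t); split; first by rewrite subr_gt0.
move=> u hu; rewrite /cball; apply: le_lt_trans (cdist_tri u s t) _.
by rewrite -ltrBrDr.
Qed.

Lemma circ_top : is_topology circ_opens.
Proof.
split.
- by move=> t _; exists 1; split => //; exact: ltr01.
- move=> A B hA hB t [At Bt].
  have [e1 [e1p h1]] := hA t At; have [e2 [e2p h2]] := hB t Bt.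
  exists (Num.min e1 e2); split; first by rewrite lt_min e1p e2p.
  by move=> s; rewrite lt_min => /andP [? ?]; split; [apply: h1 | apply: h2].
- move=> F hF t [A [FA At]]; have [e [ep h]] := hF A FA t At.
  by exists e; split => // s /h ?; exists A.
Qed.

Lemma circ_hausdorff : hausdorff circ_opens.
Proof.
move=> s t hst; have e0 : 0 < cdist s t.
  rewrite lt_def cdist_ge0 andbT; apply/eqP => /cdist_eq0; exact: hst.
exists (cball s (cdist s t / 2)), (cball t (cdist s t / 2)); split.
- exact: cball_open.
- exact: cball_open.
- by rewrite /cball cdist0 divr_gt0.
- by rewrite /cball cdist0 divr_gt0.
- move=> z [h1 h2]; have := cdist_tri s z t; rewrite (cdistC s z).
  move: h1 h2; rewrite /cball; lra.
Qed.

Lemma circ_sub_cont :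
  continuous (prod_top circ_opens circ_opens) circ_opens (fun p => p.1 - p.2).
Proof.
move=> V hV; apply: prod_open_of_rect => -[a b] /= hab.
have [e [ep he]] := hV _ hab.
exists (cball a (e / 2)), (cball b (e / 2)); split => //=.
- exact: cball_open.
- exact: cball_open.
- by rewrite /cball cdist0 divr_gt0.
- by rewrite /cball cdist0 divr_gt0.
- move=> [x y] /= hx hy; apply: he.
  rewrite cdistE' (_ : x - y - (a - b) = (x - a) + - (y - b)); last first.
    by rewrite !opprB addrACA [RHS]addrACA (addrC (- y)).
  apply: le_lt_trans (tnormD _ _) _; rewrite tnormN -!cdistE'.
  move: hx hy; rewrite /cball; lra.
Qed.

Lemma circ_top_group : top_group circ_opens.
Proof. by split; [exact: circ_top | exact: circ_sub_cont]. Qed.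

Lemma muln_character (k : nat) :
  character +%R circ_opens (fun t : circ => t *+ k).
Proof.
split; first by move=> x y; rewrite mulrnDl.
move=> V hV t /= ht; have [e [ep he]] := hV _ ht.
exists (e / (k.+1)%:R); split; first by rewrite divr_gt0 // ltr0n.
move=> s hs; apply: he; rewrite cdistE' -mulrnBl.
apply: le_lt_trans (tnorm_muln _ _) _; rewrite -cdistE'.
have hk : 0 < (k.+1)%:R :> R by rewrite ltr0n.
rewrite ltr_pdivlMr // in hs.
have := cdist_ge0 s t; rewrite -addn1 natrD in hs *; nra.
Qed.

Lemma dz_le_half x : dz x <= 1 / 2.
Proof. by rewrite /dz ge_min; case: (leP (frac x) (1/2)) => h; apply/orP; [left|right]; lra. Qed.

Lemma dz_mul_dz (k : nat) x : dz (k%:R * x) = dz (k%:R * dz x).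
Proof.
have [n ->] := dz_eq x.
have e : k%:R * x = k%:R * (x - n%:~R) + (n * k%:Z)%:~R.
  by rewrite intrM (_ : (k%:Z)%:~R = k%:R :> R) //; ring.
rewrite e dzDz; case: (lerP 0 (x - n%:~R)) => h.
- by rewrite ger0_norm.
- by rewrite ltr0_norm // mulrN dzN.
Qed.

Lemma circ_lqc : locally_quasi_convex circ_opens.
Proof.
move=> U hU U0; have [e [ep he]] := hU 0 U0.
pose n := (Num.truncn (1 / e)).+1.
have npos : 0 < n%:R :> R by rewrite ltr0n.
have hn : 1 / e < n%:R := truncnS_gt _.
have hne : 1 / (4 * n%:R) < e.
  rewrite ltr_pdivrMr; last by lra.
  by rewrite ltr_pdivrMr // in hn; nra.
pose r : R := 1 / (4 * n%:R).
have rpos : 0 < r by rewrite /r divr_gt0 //; nra.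
exists (fun t => tnorm t <= r); split.
- move=> g hg; have {hg} hg : r < tnorm g by rewrite ltNge; apply/negP.
  pose s := tnorm g.
  have s0 : 0 < s by apply: lt_trans hg.
  have s12 : s <= 1 / 2 by rewrite /s cnormE dz_le_half.
  pose m := Num.truncn (1 / (4 * s)).
  have hm1 : m%:R <= 1 / (4 * s) by rewrite truncn_le divr_ge0 //; nra.
  have hm2 : 1 / (4 * s) < m.+1%:R := truncnS_gt _.
  have hm1' : m%:R * s <= 1 / 4.
    by rewrite ler_pdivlMr ?mulr_gt0 // in hm1; nra.
  have hm2' : 1 / 4 < m.+1%:R * s.
    by rewrite ltr_pdivrMr ?mulr_gt0 // in hm2; nra.
  have hmn : (m.+1 <= n)%N.
    rewrite -(ltr_nat R); apply: le_lt_trans hm1 _.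
    have e1 : r * (4 * n%:R) = 1 by rewrite /r; field; lra.
    have e2 : (1 / (4 * s)) * (4 * s) = 1 by field; lra.
    move: e1 e2 hg; rewrite -/s; set t := 1 / (4 * s); nra.
  have hmn' : m.+1%:R <= n%:R :> R by rewrite ler_nat.
  exists (fun t : circ => t *+ m.+1); split.
  + exact: muln_character.
  + move=> a ha; apply: le_trans (tnorm_muln _ _) _.
    have ha0 := tnorm_ge0 a.
    have e1 : r * (4 * n%:R) = 1 by rewrite /r; field; lra.
    move: e1 ha ha0 hmn' npos; set na := tnorm a; set M := m.+1%:R; nra.
  + rewrite cnormE cval_muln dz_frac dz_mul_dz -cnormE -/s.
    rewrite dz_small; first by [].
    apply/andP; split; first by nra.
    rewrite -addn1 natrD.
    have [m0|m1] := (posnP m).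
    * have -> : m%:R = 0 :> R by rewrite m0.
      lra.
    * have : 1 <= m%:R :> R by rewrite ler1n.
      nra.
- exists (fun t => tnorm t < r); split.
  + exact: cball_open.
  + by rewrite /tnorm cdist0.
  + by move=> x /ltW.
- move=> x hx; apply: he; have -> : cdist x 0 = tnorm x by [].
  by move: hx hne; rewrite /r; lra.
Qed.

Lemma circ_Q : in_Q circ_opens.
Proof. split; [exact: circ_top_group | exact: circ_hausdorff | exact: circ_lqc]. Qed.

Lemma hom0 {A B : zmodType} (f : A -> B) : is_hom +%R +%R f -> f 0 = 0.
Proof.
move=> hf; have := hf 0 0; rewrite addr0 => /(congr1 (fun z => z - f 0)).
by rewrite subrr addrK.
Qed.

Lemma homN {A B : zmodType} (f : A -> B) : is_hom +%R +%R f -> forall x, f (- x) = - f x.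
Proof.
move=> hf x; apply/eqP; rewrite -subr_eq0 opprK -hf addNr.
by rewrite (hom0 hf).
Qed.

Lemma homB {A B : zmodType} (f : A -> B) : is_hom +%R +%R f -> forall x y, f (x - y) = f x - f y.
Proof. by move=> hf x y; rewrite hf homN. Qed.

Lemma bichar_comp (G H P : zmodType) (OG : opens G) (OH : opens H) (OP : opens P)
  (bP : G -> H -> P) (chi : P -> circ) :
  cont_bihom OG OH +%R OP 0 bP -> character +%R OP chi ->
  bichar OG OH (fun x y => chi (bP x y)).
Proof.
move=> [h1 h2 [b00 bc]] [chih chic]; split.
- move=> x; have [hx cx] := h1 x; split.
  + by move=> y y'; rewrite hx chih.
  + exact: cont_comp cx chic.
- move=> y; have [hy cy] := h2 y; split.
  + by move=> x x'; rewrite hy chih.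
  + exact: cont_comp cy chic.
- split; first by rewrite b00; exact: (hom0 chih).
  move=> V hV V0; have [U [hU U0 hUV]] := bc _ (chic V hV) V0.
  by exists U; split.
Qed.

Lemma part2 (G H : zmodType) (OG : opens G) (OH : opens H)
  (P : zmodType) (OP : opens P) (bP : G -> H -> P) :
  is_Q_tensor OG OH OP bP ->
  exists phi : (P -> circ) -> (G -> H -> circ),
    group_iso_on (character +%R OP) (bichar OG OH) fadd fadd2 phi.
Proof.
move=> [QP bPc univ]; exists (fun chi x y => chi (bP x y)); split.
- move=> a ha; exact: (bichar_comp bPc ha).
- move=> a a' ha ha' e.
  have [_ uniq] := univ circ circ_opens (fun x y => a (bP x y)) circ_Q (bichar_comp bPc ha).
  case: ha => ha1 ha2; case: ha' => ha1' ha2'.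
  apply: (uniq a a' ha1 ha2 _ ha1' ha2') => // x y.
  by have := congr1 (fun F => F x y) e.
- move=> b hb; have [[f [fh fc fb]] _] := univ circ circ_opens b circ_Q hb.
  exists f; first by split.
  by apply: funext => x; apply: funext => y; rewrite fb.
- by [].
Qed.

Lemma cont_trans (G : zmodType) (OG : opens G) (a : G) :
  top_group OG -> continuous OG OG (fun x => x - a).
Proof.
move=> [tG sG] V hV; exact: (@cont_pair_r _ _ OG OG a tG _ (sG V hV)).
Qed.

Lemma cball0_tnorm (z : circ) r : cball 0 r z <-> tnorm z < r.
Proof. by []. Qed.

Lemma bichar_joint (G H : zmodType) (OG : opens G) (OH : opens H) (b : G -> H -> circ) :
  top_group OG -> top_group OH -> bichar OG OH b ->
  continuous (prod_top OG OH) circ_opens (fun p => b p.1 p.2).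
Proof.
move=> tgG tgH [h1 h2 [b00 bc]].
have tG : is_topology OG by case: tgG.
have tH : is_topology OH by case: tgH.
move=> V hV; apply: prod_open_of_rect => -[x y] /= hxy.
have [e [ep he]] := hV _ hxy.
have e3 : 0 < e / 3 by rewrite divr_gt0.
have [U [hU U0 hUV]] := bc _ (@cball_open 0 (e / 3)) (ltac:(by rewrite /= b00 /cball cdist0)).
have [A0 [B0 [oA0 oB0 A00 B00 hAB0]]] := rect_of_prod_open tG tH hU U0.
have [hy cy] := h2 y; have [hx cx] := h1 x.
pose A1 := fun u => cball 0 (e / 3) (b u y).
pose B1 := fun v => cball 0 (e / 3) (b x v).
have oA1 : OG A1 by exact: cy _ (@cball_open 0 (e / 3)).
have oB1 : OH B1 by exact: cx _ (@cball_open 0 (e / 3)).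
have [_ tGI _] := tG; have [_ tHI _] := tH.
exists (fun x' => A0 (x' - x) /\ A1 (x' - x)), (fun y' => B0 (y' - y) /\ B1 (y' - y)).
split => /=.
- by apply: tGI; [exact: cont_trans tgG _ oA0 | exact: cont_trans tgG _ oA1].
- by apply: tHI; [exact: cont_trans tgH _ oB0 | exact: cont_trans tgH _ oB1].
- rewrite subrr; split => //; rewrite /A1 (hom0 hy) /cball cdist0 //.
- rewrite subrr; split => //; rewrite /B1 (hom0 hx) /cball cdist0 //.
- move=> [x' y'] /= [hA0 hA1] [hB0 hB1]; apply: he.
  set u := x' - x in hA0 hA1; set v := y' - y in hB0 hB1.
  have ex : x' = u + x by rewrite /u subrK.
  have ey : y' = v + y by rewrite /v subrK.
  have [hy'0 _] := h2 y'; have [hu0 _] := h1 u.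
  have hy' : forall a c, b (a + c) y' = b a y' + b c y' := hy'0.
  have hu : forall a c, b u (a + c) = b u a + b u c := hu0.
  have hx' : forall a c, b x (a + c) = b x a + b x c := hx.
  have -> : b x' y' = b u v + b u y + b x v + b x y.
    by rewrite ex hy' ey hu hx' !addrA.
  rewrite cdistE' addrK.
  have t1 : tnorm (b u v) < e / 3 by apply: (hUV (u, v)); exact: hAB0.
  have t2 : tnorm (b u y) < e / 3 := hA1.
  have t3 : tnorm (b x v) < e / 3 := hB1.
  apply: le_lt_trans (tnormD _ _) _.
  have := tnormD (b u v) (b u y); lra.
Qed.

Lemma hom_of_B {A B : zmodType} (f : A -> B) :
  (forall x y, f (x - y) = f x - f y) -> is_hom +%R +%R f.
Proof.
move=> hf; have f0 : f 0 = 0 by rewrite -(subrr 0) hf subrr.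
have fN : forall y, f (- y) = - f y by move=> y; rewrite -sub0r hf f0 sub0r.
by move=> x y; have := hf x (- y); rewrite opprK fN opprK.
Qed.

Lemma homMn {A B : zmodType} (f : A -> B) : is_hom +%R +%R f ->
  forall x n, f (x *+ n) = f x *+ n.
Proof.
move=> hf x; elim=> [|n ih]; first by rewrite !mulr0n (hom0 hf).
by rewrite !mulrS hf ih.
Qed.

Lemma homMz {A B : zmodType} (f : A -> B) : is_hom +%R +%R f ->
  forall x (k : int), f (x *~ k) = f x *~ k.
Proof.
move=> hf x [n|n]; first by rewrite -!pmulrn (homMn hf).
by rewrite NegzE !mulrNz -!pmulrn (homN hf) (homMn hf).
Qed.

Lemma hom_sum {A B : zmodType} (f : A -> B) : is_hom +%R +%R f ->
  forall (I : Type) (r : seq I) (F : I -> A), f (\sum_(i <- r) F i) = \sum_(i <- r) f (F i).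
Proof.
move=> hf I; elim=> [|i r ih] F; first by rewrite !big_nil (hom0 hf).
by rewrite !big_cons hf ih.
Qed.

Lemma freeg_hom_eq (K : choiceType) (M : zmodType) (f1 f2 : {freeg K} -> M) :
  is_hom +%R +%R f1 -> is_hom +%R +%R f2 ->
  (forall p, f1 << p >> = f2 << p >>) -> forall z, f1 z = f2 z.
Proof.
move=> h1 h2 e z; rewrite -(freeg_sumE z) (hom_sum h1) (hom_sum h2).
apply: eq_bigr => p _.
have -> : << coeff p z *g p >> = << p >> *~ coeff p z by rewrite freegU_mulz intz.
by rewrite (homMz h1) (homMz h2) e.
Qed.

Section TensorFacts.
Variables (G H : zmodType).
Local Notation FAT := (FA G H).
Local Notation tens := (tensor G H).
Local Notation pi := (\pi_tens).

Lemma pi_eqP (x y : FAT) : pi x = pi y <-> N (x - y).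
Proof.
split; first by move/eqmodP => /asboolP.
by move=> h; apply/eqmodP; apply/asboolP.
Qed.

Lemma N_add (x y : FAT) : N x -> N y -> N (x + y).
Proof. by move=> hx hy; have := NB hx (NB (@N0 G H) hy); rewrite sub0r opprK. Qed.

Lemma N_of_gen (x : FAT) : N_gen x -> N x.
Proof. by move=> h S _ _ hS; exact: hS. Qed.

Lemma repr_pi (x : FAT) : N (repr (pi x) - x).
Proof. by apply/pi_eqP; rewrite reprK. Qed.

Lemma pi_add (a b : FAT) : tensor_add (pi a) (pi b) = pi (a + b).
Proof.
rewrite /tensor_add; apply/pi_eqP.
rewrite opprD addrACA; exact: N_add (repr_pi a) (repr_pi b).
Qed.

Lemma tmap_homl (x : G) : is_hom +%R (@tensor_add G H) (tensor_map x).
Proof.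
move=> y y'; rewrite /tensor_map pi_add; apply/pi_eqP.
apply: N_of_gen; right; exists x, y, y'.
by rewrite opprD addrA.
Qed.

Lemma tmap_homr (y : H) : is_hom +%R (@tensor_add G H) (fun x => tensor_map x y).
Proof.
move=> x x'; rewrite /tensor_map pi_add; apply/pi_eqP.
apply: N_of_gen; left; exists x, x', y.
by rewrite opprD addrA.
Qed.

Variables (OG : opens G) (OH : opens H).

Lemma sigma_cont : continuous (prod_top OG OH) (FA_opens OG OH) (@sigma G H).
Proof.
apply: cont_generated; first exact: generated_top.
by move=> A [O [_ hO OA]]; exact: hO.
Qed.

Lemma tmap_cont : continuous (prod_top OG OH) (tensor_opens OG OH)
  (fun p => tensor_map p.1 p.2).
Proof.
move=> V hV; apply: open_ext (sigma_cont hV) _.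
by move=> [x y].
Qed.

Lemma char_pi_hom (chi : tens -> circ) :
  is_hom (@tensor_add G H) tadd chi -> is_hom +%R +%R (fun z : FAT => chi (pi z)).
Proof. by move=> hc a b /=; rewrite -pi_add hc. Qed.

End TensorFacts.

Definition pull {A : Type} (f : A -> circ) : opens A :=
  fun U => exists V, circ_opens V /\ forall z, U z <-> V (f z).

Lemma pull_top {A : Type} (f : A -> circ) : is_topology (pull f).
Proof.
have [cT cI cU] := circ_top; split.
- by exists (fun _ => True); split.
- move=> U1 U2 [V1 [o1 e1]] [V2 [o2 e2]].
  exists (fun t => V1 t /\ V2 t); split; first exact: cI.
  by move=> z; rewrite e1 e2.
- move=> F hF.
  exists (fun t => exists V, [/\ circ_opens V, F (fun z => V (f z)) & V t]); split.
  + apply: open_ext (cU (fun V => circ_opens V /\ F (fun z => V (f z))) _) _.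
    * by move=> V [].
    * by move=> t; split; [case=> V [[? ?] ?]; exists V | case=> V [? ? ?]; exists V].
  + move=> z; split.
    * case=> U [FU Uz]; have [V [oV eV]] := hF U FU.
      exists V; split => //; last by rewrite -eV.
      suff -> : (fun z => V (f z)) = U by [].
      by apply: funext => w; apply: propext; rewrite eV.
    * by case=> V [_ FV Vz]; exists (fun z => V (f z)).
Qed.

Lemma pull_group {A : zmodType} (f : A -> circ) : is_hom +%R +%R f -> top_group (pull f).
Proof.
move=> hf; split; first exact: pull_top.
move=> U [V [oV eV]].
have hg : continuous (prod_top (pull f) (pull f)) (prod_top circ_opens circ_opens)
    (fun p => (f p.1, f p.2)).
  apply: cont_generated; first exact: generated_top.
  move=> W [[U' [oU' ->]]|[U' [oU' ->]]] /=; apply: generated_sub.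
  + by left; exists (fun z => U' (f z)); split => //; exists U'.
  + by right; exists (fun z => U' (f z)); split => //; exists U'.
apply: open_ext (hg _ (circ_sub_cont oV)) _ => p /=.
by rewrite eV (homB hf).
Qed.

Lemma pull_cont {A : Type} (f : A -> circ) : continuous (pull f) circ_opens f.
Proof. by move=> V oV; exists V. Qed.

Lemma part1 (G H : zmodType) (OG : opens G) (OH : opens H) :
  top_group OG -> top_group OH ->
  exists phi : (tensor G H -> circ) -> (G -> H -> circ),
     group_iso_on (character (@tensor_add G H) (tensor_opens OG OH))
                  (bichar OG OH) fadd fadd2 phi.
Proof.
move=> tgG tgH.
have tG : is_topology OG by case: tgG.
have tH : is_topology OH by case: tgH.
exists (fun chi x y => chi (tensor_map x y)); split.
-
  move=> chi [chih chic].
  have cc : continuous (prod_top OG OH) circ_opens (fun p => chi (tensor_map p.1 p.2)).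
    by move=> V hV; exact: (tmap_cont (chic V hV)).
  split.
  + move=> x; split.
    * by move=> y y'; rewrite tmap_homl chih.
    * by move=> V hV; exact: (@cont_pair_l _ _ OG OH x tH _ (cc V hV)).
  + move=> y; split.
    * by move=> x x'; rewrite tmap_homr chih.
    * by move=> V hV; exact: (@cont_pair_r _ _ OG OH y tG _ (cc V hV)).
  + split; last by move=> V hV V0; exact: (@cont_at_of _ _ _ _ _ (0, 0) cc V hV V0).
    have := congr1 chi (tmap_homl 0 0 0); rewrite addr0 chih.
    move=> /(congr1 (fun z : circ => z - chi (tensor_map 0 0))).
    by rewrite subrr -/(GRing.add _ _) addrK.
-
  move=> a a' [ha _] [ha' _] e; apply: funext => t.
  rewrite -(reprK t).
  apply: (freeg_hom_eq (char_pi_hom ha) (char_pi_hom ha')) => -[x y].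
  by have := congr1 (fun F => F x y) e.
-
  move=> b hb.
  pose chi0 : FA G H -> circ :=
    @fglift int (zmodule circ) (G * H)%type (fun p => b p.1 p.2).
  have h0 : is_hom +%R +%R chi0 by apply: hom_of_B; move=> x y; exact: (@lift_is_additive int (G * H)%type (zmodule circ) (fun p => b p.1 p.2) x y).
  have chi0U : forall x y, chi0 (sigma (x, y)) = b x y.
    by move=> x y; rewrite /chi0 /sigma liftU scale1r.
  have [h1 h2 _] := hb.
  have chi0N : forall z, N z -> chi0 z = 0.
    move=> z hz; apply: (hz (fun z => chi0 z = 0)); first exact: hom0 h0.
    - by move=> u v hu hv; rewrite (homB h0) hu hv subrr.
    - move=> u [[x [x' [y ->]]]|[x [y [y' ->]]]]; rewrite !(homB h0) !chi0U.
      + have [hy _] := h2 y; rewrite (hy x x') taddE.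
        by rewrite addrAC addrK subrr.
      + have [hx _] := h1 x; rewrite (hx y y') taddE.
        by rewrite addrAC addrK subrr.
  pose chi : tensor G H -> circ := fun t => chi0 (repr t).
  have chi_pi : forall z, chi (\pi_(tensor G H) z) = chi0 z.
    move=> z; apply/eqP; rewrite -subr_eq0 -(homB h0); apply/eqP.
    exact: chi0N (repr_pi z).
  exists chi.
  + split.
    * move=> s t; rewrite /tensor_add chi_pi h0.
      by [].
    * move=> V hV.
      have oU : FA_opens OG OH (fun z => V (chi0 z)).
        apply: generated_sub; exists (pull chi0); split.
        - exact: pull_group.
        - move=> U [W [oW eW]].
          apply: open_ext (bichar_joint tgG tgH hb oW) _ => -[x y] /=.
          by rewrite eW chi0U.
        - by exists V.
      by apply: open_ext oU _ => z; rewrite chi_pi.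
  + by apply: funext => x; apply: funext => y; rewrite /tensor_map chi_pi chi0U.
- by [].
Qed.

Theorem proposition3p5 (G H : zmodType) (OG : opens G) (OH : opens H) :
  in_Q OG -> in_Q OH ->
  (* the dual of G (x) H is isomorphic to X(G,H) *)
  (exists phi : (tensor G H -> circ) -> (G -> H -> circ),
     group_iso_on (character (@tensor_add G H) (tensor_opens OG OH))
                  (bichar OG OH) fadd fadd2 phi) /\
  (* the dual of G (x)_Q H is isomorphic to X(G,H) *)
  (forall (P : zmodType) (OP : opens P) (bP : G -> H -> P),
     is_Q_tensor OG OH OP bP ->
     exists phi : (P -> circ) -> (G -> H -> circ),
       group_iso_on (character +%R OP) (bichar OG OH) fadd fadd2 phi).
Proof.
move=> [tgG _ _] [tgH _ _]; split.
- exact: part1.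
- move=> P OP bP; exact: part2.
Qed.
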